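(* Let $T$ be a generalized tree-like graph with parameters $n_o\ge1$, $k_c$, $\hat k_b\ge1$, orchestrator vertices $o_1,\dots,o_{n_o}$ and bridge sets $B_i=N_{o_i}\cap N_{o_{i+1}}$. Let $1\le a\le b\le n_o$ and let $c\ne c'$ be clients with $c\in N_{o_a}$, $c'\in N_{o_b}$, and, if $a<b$, $c\notin N_{o_{a+1}}$ and $c'\notin N_{o_{b-1}}$; then the proximity is $d(c,c')=b-a+1$. For each $m\in\{a,\dots,b-1\}$ choose a bridge $\beta_m\in B_m$. Starting from $T$, apply successively, for $m=a,a+1,\dots,b-1$, the $\sigma_x$-measurement rule at $o_m$ with support vertex $b_0=\beta_m$ (replace $H$ by $\tau_{\beta_m}(\tau_{o_m}(\tau_{\beta_m}(H))-o_m)$), and finally the $\sigma_x$-measurement rule at $o_b$ with support vertex $b_0=c'$. Then all these $d(c,c')$ operations are well defined (each support vertex is a neighbour of the measured vertex in the current graph) and in the resulting graph $c$ and $c'$ are adjacent. Equivalently, $d(c,c')$ single-qubit $\sigma_x$-measurements on orchestrator qubits along a shortest $c$–$c'$ path create, up to local unitaries, an edge (artificial link) between $c$ and $c'$.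
   Context: All graphs are finite, simple and undirected. For $H=(V,E)$ and $a\in V$, $N_a=\{b:\{a,b\}\in E\}$; $\tau_a(H)$ toggles the edge $\{b,c\}$ for every pair of distinct $b,c\in N_a$ and leaves other edges unchanged; $H-a$ deletes $a$ and its incident edges. Graph state $\ket{H}=\prod_{\{a,b\}\in E}\mathrm{CZ}_{ab}\ket{+}^{\otimes|V|}$; measuring the qubit at $a$ in $\sigma_x$ with chosen $b_0\in N_a$ yields, up to local unitaries, the graph state of $\tau_{b_0}(\tau_a(\tau_{b_0}(H))-a)$. Generalized tree-like graph with parameters $n_o\ge1$, $k_c$, $\hat k_b\ge1$: vertex set $\{o_1,\dots,o_{n_o}\}\cup V_c$ (disjoint) such that (i) every edge joins some $o_i$ to a client; (ii) $|N_{o_i}|=k_c$ for all $i$; (iii) $|N_{o_i}\cap N_{o_{i+1}}|=\hat k_b$ for $1\le i<n_o$; (iv) $N_{o_i}\cap N_{o_j}=\emptyset$ for $|i-j|\ge2$; (v) every client is adjacent to some $o_i$. A client adjacent to more than one orchestrator vertex is a bridge. The proximity $d(c,c')$ of distinct clients is $1$ plus the number of bridges lying strictly between $c$ and $c'$ on a shortest $c$–$c'$ path. *)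

(* Defs.v *)
From mathcomp Require Import all_boot.
Set Implicit Arguments.
Unset Strict Implicit.
Unset Printing Implicit Defensive.

(* A graph on a finite ambient type V: a vertex set and a set of edges,
   each edge being a 2-element subset of the vertex set (simple, undirected). *)
Record graph (V : finType) := Graph { gverts : {set V}; gedges : {set {set V}} }.

Definition simple_graph (V : finType) (G : graph V) : Prop :=
  forall e, e \in gedges G -> #|e| = 2 /\ e \subset gverts G.

Definition adj (V : finType) (G : graph V) (x y : V) : bool :=
  (x != y) && ([set x; y] \in gedges G).

Definition nbr (V : finType) (G : graph V) (a : V) : {set V} :=
  [set b in gverts G | adj G a b].

Definition tau (V : finType) (G : graph V) (a : V) : graph V :=
  let X := [set [set b; c] | b in nbr G a, c in nbr G a & b != c] in
  Graph (gverts G) ((gedges G :\: X) :|: (X :\: gedges G)).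

Definition vdel (V : finType) (G : graph V) (a : V) : graph V :=
  Graph (gverts G :\ a) [set e in gedges G | a \notin e].

Definition meas_x (V : finType) (G : graph V) (a b0 : V) : graph V :=
  tau (vdel (tau (tau G b0) a) a) b0.

(* orchestrator vertices o_1, ..., o_n (indexed by naturals 1..n) *)
Definition orch_set (V : finType) (o : nat -> V) (n : nat) : {set V} :=
  [set x | has (fun i => o i == x) (iota 1 n)].

Definition clients (V : finType) (G : graph V) (o : nat -> V) (n : nat) : {set V} :=
  gverts G :\: orch_set o n.

Definition tree_like (V : finType) (G : graph V) (n kc kb : nat) (o : nat -> V) : Prop :=
  [/\ simple_graph G, 1 <= n, 1 <= kb,
      (forall i, 1 <= i <= n -> o i \in gverts G) /\
      (forall i j, 1 <= i <= n -> 1 <= j <= n -> o i = o j -> i = j) &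
  [/\ (forall e, e \in gedges G ->
          exists i c, [/\ 1 <= i <= n, c \in clients G o n & e = [set o i; c]]),
      (forall i, 1 <= i <= n -> #|nbr G (o i)| = kc),
      (forall i, 1 <= i < n -> #|nbr G (o i) :&: nbr G (o i.+1)| = kb),
      (forall i j, 1 <= i <= n -> 1 <= j <= n ->
          (i + 2 <= j) || (j + 2 <= i) -> nbr G (o i) :&: nbr G (o j) = set0) &
      (forall c, c \in clients G o n ->
          exists i, 1 <= i <= n /\ c \in nbr G (o i))]].

Definition bridge (V : finType) (G : graph V) (o : nat -> V) (n : nat) (x : V) : bool :=
  (x \in clients G o n) &&
  has (fun i => has (fun j => [&& i != j, x \in nbr G (o i) & x \in nbr G (o j)])
                    (iota 1 n)) (iota 1 n).

Definition walk (V : finType) (G : graph V) (x : V) (p : seq V) (y : V) : bool :=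
  path (adj G) x p && (last x p == y).

Definition shortest_walk (V : finType) (G : graph V) (x : V) (p : seq V) (y : V) : Prop :=
  walk G x p y /\ forall q, walk G x q y -> size p <= size q.

(* d(c,c') = d : 1 + number of bridges strictly inside a shortest c--c' path
   (there is a shortest path, and every shortest path gives the value d) *)
Definition is_proximity (V : finType) (G : graph V) (o : nat -> V) (n : nat)
    (c c' : V) (d : nat) : Prop :=
  (exists p, shortest_walk G c p c') /\
  (forall p, shortest_walk G c p c' ->
     d = (count (bridge G o n) (behead (belast c p))).+1).

Fixpoint chain (V : finType) (G : graph V) (o beta : nat -> V) (a k : nat) : graph V :=
  match k with
  | 0 => G
  | k'.+1 => meas_x (chain G o beta a k') (o (a + k')) (beta (a + k'))
  end.

(* Main.v *)
Require Import Defs.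
From mathcomp Require Import all_boot zify.
Set Implicit Arguments. Unset Strict Implicit. Unset Printing Implicit Defensive.

Section G.
Variable V : finType.
Implicit Types (G : graph V) (x y u v a z w : V).

Lemma adjC G x y : adj G x y = adj G y x.
Proof.
rewrite /adj; have -> : [set x; y] = [set y; x] by apply/setP=> w; rewrite !inE orbC.
by rewrite eq_sym.
Qed.

Lemma adj_irr G x : adj G x x = false.
Proof. by rewrite /adj eqxx. Qed.

Lemma in_nbr G u z : (z \in nbr G u) = (z \in gverts G) && adj G u z.
Proof. by rewrite inE. Qed.

Lemma adj_tau G v x y : x != y ->
  adj (tau G v) x y = adj G x y (+) ((x \in nbr G v) && (y \in nbr G v)).
Proof.
move=> xy; rewrite /adj /tau /= xy /= in_setU !in_setD.
set X := imset2 _ _ _.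
have -> : ([set x; y] \in X) = (x \in nbr G v) && (y \in nbr G v).
  apply/idP/idP.
    case/imset2P=> b c bN; rewrite inE => /andP[cN _] e.
    have hx : x \in [set b; c] by rewrite -e in_set2 eqxx.
    have hy : y \in [set b; c] by rewrite -e in_set2 eqxx orbT.
    move: hx hy; rewrite !in_set2 => hx hy.
    have Hx : x \in nbr G v by case/orP: hx => /eqP->.
    have Hy : y \in nbr G v by case/orP: hy => /eqP->.
    by rewrite Hx Hy.
  case/andP=> xN yN; apply/imset2P; apply: (Imset2spec (x1:=x) (x2:=y)) => //.
  by rewrite inE yN xy.
by case: ([set x; y] \in gedges G); case: ((x \in nbr G v) && (y \in nbr G v)).
Qed.

Lemma adj_vdel G a x y : adj (vdel G a) x y = [&& adj G x y, x != a & y != a].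
Proof.
rewrite /adj /vdel /= in_set; case: (x != y) => //=.
case: ([set x; y] \in gedges G) => //=.
rewrite !inE negb_or ![a == _]eq_sym //.
Qed.

Lemma gverts_meas G a b0 : gverts (meas_x G a b0) = gverts G :\ a.
Proof. by []. Qed.


Lemma meas_adj G a w x y :
  a \in gverts G -> w \in nbr G a -> x != y -> x != a -> y != a ->
  x \in gverts G -> y \in gverts G ->
  adj (meas_x G a w) x y = adj G x y (+) (adj G w x && adj G w y)
    (+) ((adj G a x (+) adj G w x) && (adj G a y (+) adj G w y))
    (+) [&& x != w, y != w, adj G a x & adj G a y].
Proof.
move=> aV; rewrite in_nbr => /andP[wV aw] xy xa ya xV yV.
have wa : w != a by apply: contraTneq aw => ->; rewrite adj_irr.
have wa' : adj G w a by rewrite adjC.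
have aN : a \in nbr G w by rewrite in_nbr aV wa'.
have wNw : (w \in nbr G w) = false by rewrite in_nbr adj_irr andbF.
have N1 : forall z, z != a -> z \in gverts G ->
   (z \in nbr (tau G w) a) = adj G a z (+) adj G w z.
  move=> z za zV; rewrite in_nbr /= zV adj_tau 1?eq_sym // aN in_nbr zV //.
have A2 : forall z, z != w -> z != a -> z \in gverts G ->
   adj (tau (tau G w) a) w z = adj G a z.
  move=> z zw za zV; rewrite adj_tau 1?eq_sym // adj_tau 1?eq_sym //.
  rewrite N1 // N1 // wNw /= adj_irr /= aw /=.
  by case: (adj G w z); case: (adj G a z).
have N3 : forall z, z != a -> z \in gverts G ->
   (z \in nbr (vdel (tau (tau G w) a) a) w) = (z != w) && adj G a z.
  move=> z za zV; rewrite in_nbr /= in_setD1 za zV /= adj_vdel wa za /= andbT.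
  case: (eqVneq z w) => [->|zw]; first by rewrite adj_irr.
  by rewrite A2.
rewrite /meas_x adj_tau // N3 // N3 // adj_vdel xa ya !andbT.
rewrite adj_tau // N1 // N1 // adj_tau // !in_nbr xV yV /=.
by case: (x != w); case: (y != w); case: (adj G x y); case: (adj G w x);
   case: (adj G w y); case: (adj G a x); case: (adj G a y).
Qed.


Lemma meas_adj1 G a w x y :
  a \in gverts G -> w \in nbr G a -> x != y -> x != a -> y != a ->
  x \in gverts G -> y \in gverts G -> adj G a x = false ->
  adj (meas_x G a w) x y = adj G x y (+) (adj G w x && adj G a y).
Proof.
move=> aV wN xy xa ya xV yV ax; rewrite meas_adj // ax /= !andbF /= addbF.
by case: (adj G x y); case: (adj G w x); case: (adj G a y); case: (adj G w y).
Qed.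

Lemma meas_adj_fin G a w x :
  a \in gverts G -> w \in nbr G a -> x != w -> x != a -> x \in gverts G ->
  adj (meas_x G a w) x w = adj G a x.
Proof.
move=> aV wN xw xa xV.
have wV : w \in gverts G by move: wN; rewrite in_nbr => /andP[].
have aw : adj G a w by move: wN; rewrite in_nbr => /andP[].
have wa : w != a by apply: contraTneq aw => ->; rewrite adj_irr.
rewrite meas_adj // eqxx /= !andbF addbF adj_irr aw /= andbT (adjC G w x).
by case: (adj G x w); case: (adj G a x).
Qed.

End G.

Section T.
Variables (V : finType) (T : graph V) (n kc kb : nat) (o : nat -> V).
Hypothesis tl : tree_like T n kc kb o.

Let cl := clients T o n.

Lemma orch_not_client i : 1 <= i <= n -> o i \notin cl.
Proof.
move=> hi; rewrite /cl /clients in_setD negb_and negbK; apply/orP; left.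
rewrite /orch_set inE; apply/hasP; exists i => //.
by rewrite mem_iota; case/andP: hi => h1 h2; rewrite h1 /= addnC addn1 ltnS.
Qed.

Lemma client_gv z : z \in cl -> z \in gverts T.
Proof. by rewrite /cl /clients in_setD => /andP[]. Qed.

Lemma o_inj i j : 1 <= i <= n -> 1 <= j <= n -> o i = o j -> i = j.
Proof. by case: tl => _ _ _ [_ H] _; apply: H. Qed.

Lemma orch_gv i : 1 <= i <= n -> o i \in gverts T.
Proof. by case: tl => _ _ _ [H _] _; apply: H. Qed.

Lemma edge_cases u v : adj T u v ->
  exists2 i, 1 <= i <= n & ((u = o i /\ v \in cl) \/ (v = o i /\ u \in cl)).
Proof.
move=> h; have := h; rewrite /adj => /andP[uv he].
case: tl => _ _ _ _ [Hi _ _ _ _].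
case: (Hi _ he) => i [z [hi hz e]]; exists i => //.
have hu : u \in [set o i; z] by rewrite -e in_set2 eqxx.
have hv : v \in [set o i; z] by rewrite -e in_set2 eqxx orbT.
move: hu hv; rewrite !in_set2.
case/orP=> /eqP hu; case/orP=> /eqP hv.
- by move: uv; rewrite hu hv eqxx.
- by left; rewrite hv.
- by right; rewrite hu.
- by move: uv; rewrite hu hv eqxx.
Qed.

Lemma adj_oc i z : 1 <= i <= n -> adj T (o i) z -> z \in cl.
Proof.
move=> hi /edge_cases[j hj [[_ ->] // | [_ hc]]].
by move: (orch_not_client hi); rewrite hc.
Qed.

Lemma orch_nonadj i j : 1 <= i <= n -> 1 <= j <= n -> adj T (o i) (o j) = false.
Proof.
move=> hi hj; apply/negP => /(adj_oc hi) hc.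
by move: (orch_not_client hj); rewrite hc.
Qed.

Lemma adj_c_o i z : 1 <= i <= n -> adj T z (o i) -> z \in cl.
Proof. by move=> hi; rewrite adjC; apply: adj_oc. Qed.

Lemma sep i j z : 1 <= i <= n -> 1 <= j <= n -> i + 2 <= j ->
  adj T (o i) z -> adj T (o j) z -> False.
Proof.
move=> hi hj hij ai aj.
have zc := adj_oc hi ai.
case: tl => _ _ _ _ [_ _ _ Hiv _].
have := Hiv i j hi hj; rewrite hij => /(_ erefl) /setP /(_ z).
by rewrite in_setI !in_nbr client_gv // ai aj inE.
Qed.

Lemma bridgeI i z : 1 <= i -> i < n -> z \in cl -> adj T (o i) z -> adj T (o i.+1) z ->
  bridge T o n z.
Proof.
move=> h1 h2 zc ai aj; rewrite /bridge zc /=; apply/hasP; exists i.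
  by rewrite mem_iota h1 /= addnC addn1 ltnS ltnW.
apply/hasP; exists i.+1.
  by rewrite mem_iota /= addnC addn1 ltnS.
by rewrite neq_ltn ltnSn !in_nbr client_gv // ai aj.
Qed.

Lemma bridge_client z : bridge T o n z -> z \in cl.
Proof. by case/andP. Qed.

End T.

Section C.
Variables (V : finType) (T : graph V) (n kc kb : nat) (o : nat -> V).
Hypothesis tl : tree_like T n kc kb o.
Variables (a b : nat) (c c' : V) (beta : nat -> V).
Let cl := clients T o n.
Hypotheses (ha : 1 <= a) (hab : a <= b) (hbn : b <= n) (hc : c \in cl) (hc' : c' \in cl)
  (hcc : c != c') (hac : adj T (o a) c) (hbc : adj T (o b) c')
  (hlt : a < b -> ~~ adj T (o a.+1) c /\ ~~ adj T (o b.-1) c')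
  (hbeta : forall m, a <= m < b -> adj T (o m) (beta m) && adj T (o m.+1) (beta m)).

Definition Inv k (G : graph V) :=
 [/\ forall x, (x \in gverts G) = (x \in gverts T) && all (fun i => o i != x) (iota a k),
     forall j z, a + k < j <= n -> z \in cl -> adj G (o j) z = adj T (o j) z,
     forall i j, a + k <= i <= n -> a + k <= j <= n -> adj G (o i) (o j) = false,
     adj G (o (a+k)) c &
     forall z, z \in cl -> (forall i, a <= i < a + k -> ~~ adj T (o i) z) ->
        adj G (o (a+k)) z = adj T (o (a+k)) z].

Lemma cl_neq z i : z \in cl -> 1 <= i <= n -> z != o i.
Proof.
move=> zc hi; apply: contraTneq zc => ->; exact: (orch_not_client T o hi).
Qed.

Ltac li := repeat match goal with
  | H : is_true (leq _ _) |- _ => revert H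
  | H : is_true (leq _ _ && leq _ _) |- _ => revert H
  | H : @eq nat _ _ |- _ => revert H
  end; repeat match goal with H : _ |- _ => clear H end; intros; lia.

Lemma inv_chain k : k <= b - a -> Inv k (chain T o beta a k).
Proof.
elim: k => [|k IH] hk.
  split => //=.
  - by move=> x; rewrite andbT.
  - move=> i j; rewrite addn0 => /andP[hi1 hi2] /andP[hj1 hj2].
    apply: (orch_nonadj tl); apply/andP; split => //; exact: leq_trans ha _.
  - by rewrite addn0.
have hk' : k <= b - a by apply: ltnW.
case: (IH hk') => HV HA HD HB1 HB2 {IH}.
have -> : chain T o beta a k.+1 = meas_x (chain T o beta a k) (o (a+k)) (beta (a+k)) by [].
rewrite /Inv addnS.
move: HV HA HD HB1 HB2 hk; move: (chain T o beta a k) => G.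
move Em : (a + k) => m HV HA HD HB1 HB2 hk.
have hmb : m < b by li.
have hm : 1 <= m <= n by apply/andP; li.
have hm1 : 1 <= m.+1 <= n by apply/andP; li.
have hma : a <= m by li.
set bt := beta m.
have /andP[abt abt1] : adj T (o m) bt && adj T (o m.+1) bt by apply: hbeta; rewrite hma.
have btc : bt \in cl by apply: (adj_oc tl hm).
have vG : forall z, z \in cl -> z \in gverts G.
  move=> z zc; rewrite HV (client_gv zc) /=; apply/allP => i; rewrite mem_iota => /andP[h1 h2].
  rewrite eq_sym; apply: cl_neq => //; apply/andP; li.
have oG : forall j, m <= j <= n -> o j \in gverts G.
  move=> j /andP[h1 h2]; have hj : 1 <= j <= n by apply/andP; li.
  rewrite HV (orch_gv tl hj) /=; apply/allP => i; rewrite mem_iota => /andP[i1 i2].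
  apply/eqP => /(o_inj tl) E.
  have : i = j by apply: E => //; apply/andP; li.
  li.
have omG : o m \in gverts G by apply: oG; apply/andP; li.
have bN : bt \in nbr G (o m).
  rewrite in_nbr vG // HB2 // => i /andP[i1 i2]; apply/negP => ai.
  have hi : 1 <= i <= n by apply/andP; li.
  by apply: (sep tl hi hm1 _ ai abt1); li.
have Dm : forall j, m <= j <= n -> adj G (o m) (o j) = false.
  by move=> j hj; apply: HD => //; apply/andP; li.
have oneq : forall i j, 1 <= i <= n -> 1 <= j <= n -> i != j -> o i != o j.
  by move=> i j hi hj; apply: contraNneq => /(o_inj tl hi hj) ->.
have ocn : forall j z, 1 <= j <= n -> z \in cl -> (o j != z) * (z != o j).
  by move=> j z hj zc; rewrite eq_sym cl_neq.
split.
- move=> x; rewrite gverts_meas in_setD1 HV -addn1 iotaD all_cat /= andbT Em.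
  by rewrite eq_sym; case: (o m != x); rewrite ?andbT ?andbF.
- move=> j z /andP[j1 j2] zc.
  have hj : 1 <= j <= n by apply/andP; li.
  have h1 : adj G (o m) (o j) = false by apply: Dm; apply/andP; li.
  have h2 : o j \in gverts G by apply: oG; apply/andP; li.
  have h3 : o j != o m by rewrite oneq //; apply/eqP; li.
  have zG := vG _ zc.
  have [h4 h5] := ocn j z hj zc; have h6 := (ocn m z hm zc).2.
  rewrite meas_adj1 //.
  have -> : adj G bt (o j) = false.
    rewrite adjC HA //; last by li.
    by apply/negP => ajb; apply: (sep tl hm hj _ abt ajb); li.
  by rewrite /= addbF HA //; li.
- move=> i j /andP[i1 i2] /andP[j1 j2].
  have hi : 1 <= i <= n by apply/andP; li.
  have hj : 1 <= j <= n by apply/andP; li.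
  case: (eqVneq i j) => [->|ij]; first by rewrite adj_irr.
  have h1 : adj G (o m) (o i) = false by apply: Dm; apply/andP; li.
  have h2 : o j \in gverts G by apply: oG; apply/andP; li.
  have h2' : o i \in gverts G by apply: oG; apply/andP; li.
  have h3 : o j != o m by rewrite oneq //; apply/eqP; li.
  have h3' : o i != o m by rewrite oneq //; apply/eqP; li.
  have h4 : o i != o j by rewrite oneq.
  rewrite meas_adj1 //.
  rewrite HD; [|apply/andP; li|apply/andP; li].
  by rewrite Dm ?andbF //; apply/andP; li.
- have c1 : adj T (o m.+1) c = false.
    apply/negP => ac1.
    case: (posnP k) => [k0|kpos].
      case: (hlt (leq_ltn_trans hma hmb)) => h _; move: h.
      have e : a.+1 = m.+1 by li.
      by rewrite e ac1.
    have haa : 1 <= a <= n by apply/andP; li.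
    by apply: (sep tl haa hm1 _ hac ac1); li.
  have h1 : adj G (o m) (o m.+1) = false by apply: Dm; apply/andP; li.
  have h2 : o m.+1 \in gverts G by apply: oG; apply/andP; li.
  have h3 : o m.+1 != o m by rewrite oneq //; apply/eqP; li.
  have zG := vG _ hc.
  have h5 := (ocn m.+1 c hm1 hc).1; have h6 := (ocn m c hm hc).2.
  rewrite meas_adj1 //.
  have hmm : m < m.+1 <= n by apply/andP; li.
  rewrite (HA _ _ hmm hc) c1 /= adjC (HA _ _ hmm btc) abt1 /=.
  exact: HB1.
- move=> z zc hz.
  have h1 : adj G (o m) (o m.+1) = false by apply: Dm; apply/andP; li.
  have h2 : o m.+1 \in gverts G by apply: oG; apply/andP; li.
  have h3 : o m.+1 != o m by rewrite oneq //; apply/eqP; li.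
  have zG := vG _ zc.
  have h5 := (ocn m.+1 z hm1 zc).1; have h6 := (ocn m z hm zc).2.
  rewrite meas_adj1 //.
  have hmm : m < m.+1 <= n by apply/andP; li.
  rewrite (HA _ _ hmm zc) (adjC G bt) (HA _ _ hmm btc) abt1 /= HB2 //.
    by rewrite (negbTE (hz m _)) ?addbF //; apply/andP; li.
  by move=> i /andP[i1 i2]; apply: hz; apply/andP; li.
Qed.


Lemma client_chain k z : k <= b - a -> z \in cl -> z \in gverts (chain T o beta a k).
Proof.
move=> hk zc; case: (inv_chain hk) => HV _ _ _ _.
rewrite HV (client_gv zc) /=; apply/allP => i; rewrite mem_iota => /andP[h1 h2].
rewrite eq_sym; apply: cl_neq => //; apply/andP; li.
Qed.

Lemma orch_chain k : k <= b - a -> o (a + k) \in gverts (chain T o beta a k).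
Proof.
move=> hk; case: (inv_chain hk) => HV _ _ _ _.
have hj : 1 <= a + k <= n by apply/andP; li.
rewrite HV (orch_gv tl hj) /=; apply/allP => i; rewrite mem_iota => /andP[i1 i2].
apply/eqP => /(o_inj tl) E.
have : i = a + k by apply: E => //; apply/andP; li.
li.
Qed.

Lemma walk_dec x p y : x \in cl -> y \in cl -> walk T x p y -> p != [::] ->
  exists i v2 p2, [/\ 1 <= i <= n, p = [:: o i, v2 & p2], adj T (o i) x,
     adj T (o i) v2 & (v2 \in cl) && walk T v2 p2 y].
Proof.
move=> xc yc; case: p => [|v1 p1] //= /andP[/andP[a1 pth] lst] _.
case: (edge_cases tl a1) => i hi [[ex _]|[ev _]].
  by move: (orch_not_client T o hi); rewrite -ex xc.
case: p1 pth lst => [|v2 p2] /=.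
  by move=> _ /eqP ey; move: (orch_not_client T o hi); rewrite -ev ey yc.
move=> /andP[a2 pth] lst.
exists i, v2, p2; rewrite -ev; split => //; first by rewrite adjC.
apply/andP; split; first by apply: (adj_oc tl hi); rewrite -ev.
by apply/andP; split.
Qed.

Lemma bridge_o i : 1 <= i <= n -> bridge T o n (o i) = false.
Proof.
move=> hi; apply/negP => /bridge_client hb.
by move: (orch_not_client T o hi); rewrite hb.
Qed.

Lemma upper y : y \in cl -> forall N p x, size p <= N -> walk T x p y -> x \in cl ->
  p != [::] -> 2 * count (bridge T o n) (behead (belast x p)) + 2 <= size p.
Proof.
move=> yc; elim=> [|N IH] p x hs hw xc hp.
  by case: p hs hw hp.
case: (walk_dec xc yc hw hp) => i [v2 [p2 [hi ep ai av2 /andP[v2c hw2]]]]; subst p; clear hw hp.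
case: p2 hs hw2 => [|w r] hs hw2.
  by rewrite /= bridge_o.
have -> : behead (belast x [:: o i, v2, w & r]) = o i :: v2 :: behead (belast v2 (w :: r)) by [].
rewrite /= bridge_o //=.
have := IH (w :: r) v2; rewrite /=; move=> /(_ _ hw2 v2c isT).
have hsr : (size r).+1 <= N by move: hs => /=; li.
move=> /(_ hsr) H.
case: (bridge T o n v2) => /=; li.
Qed.

Lemma lower y s0 : y \in cl -> (forall i, 1 <= i <= n -> adj T (o i) y -> s0 <= i) ->
  forall N p x t, size p <= N -> walk T x p y -> x \in cl ->
  (forall i, 1 <= i <= n -> adj T (o i) x -> i <= t) -> x != y ->
  s0 - t <= count (bridge T o n) (behead (belast x p)).
Proof.
move=> yc hs0; elim=> [|N IH] p x t hs hw xc hx xy.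
  case: p hs hw => // _ /andP[_ /= /eqP e]; by rewrite e eqxx in xy.
have hp : p != [::] by case: p hw hs => // /andP[_ /= /eqP e]; rewrite e eqxx in xy.
case: (walk_dec xc yc hw hp) => i [v2 [p2 [hi ep ai av2 /andP[v2c hw2]]]]; subst p; clear hw hp.
have hit : i <= t by apply: hx.
case: (eqVneq v2 y) => [ev|v2y].
  have : s0 <= i by apply: hs0 => //; rewrite -ev.
  move=> h; have -> : s0 - t = 0 by li.
  done.
case: p2 hs hw2 => [|w r] hs hw2.
  by move: hw2 => /andP[_ /= /eqP e]; rewrite e eqxx in v2y.
have -> : behead (belast x [:: o i, v2, w & r]) = o i :: v2 :: behead (belast v2 (w :: r)) by [].
rewrite /= bridge_o //=.
have hsr : size (w :: r) <= N by move: hs => /=; li.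
case hb : (bridge T o n v2).
  have := IH (w :: r) v2 t.+1 hsr hw2 v2c.
  have hlow : forall j, 1 <= j <= n -> adj T (o j) v2 -> j <= t.+1.
    move=> j hj aj; case: (leqP j t.+1) => // hjt.
    by exfalso; apply: (sep tl hi hj _ av2 aj); li.
  move=> /(_ hlow v2y) /= H; rewrite /=; li.
have := IH (w :: r) v2 t hsr hw2 v2c.
have hlow : forall j, 1 <= j <= n -> adj T (o j) v2 -> j <= t.
  move=> j hj aj; case: (leqP j t) => // hjt.
  case: (eqVneq j i.+1) => [ej|nej].
    have hi' : i < n by move: hj; rewrite ej => /andP[_ ->].
    have h1i : 1 <= i by case/andP: hi.
    have aj2 : adj T (o i.+1) v2 by rewrite -ej.
    have : bridge T o n v2 by exact: (bridgeI h1i hi' v2c av2 aj2).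
    by rewrite hb.
  have hj2 : i.+1 < j by rewrite ltn_neqAle eq_sym nej /=; li.
  by exfalso; apply: (sep tl hi hj _ av2 aj); li.
move=> /(_ hlow v2y) /= H; rewrite /=; li.
Qed.

Fixpoint route (m k : nat) : seq V :=
  if k is k'.+1 then beta m :: o m.+1 :: route m.+1 k' else [:: c'].

Lemma route_ok k : forall m, a <= m -> m + k = b ->
  walk T (o m) (route m k) c' /\ size (route m k) = (2 * k).+1.
Proof.
elim: k => [|k IH] m hm hmk.
  rewrite addn0 in hmk; subst m; split => //.
  by rewrite /walk /= hbc eqxx.
have /andP[h1 h2] : adj T (o m) (beta m) && adj T (o m.+1) (beta m).
  by apply: hbeta; apply/andP; li.
have hm1 : a <= m.+1 by li.
have hmk1 : m.+1 + k = b by li.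
case: (IH m.+1 hm1 hmk1) => /andP[hw hl] hs.
split; last by rewrite /= hs; li.
by rewrite /walk /= h1 adjC h2 hw.
Qed.

Lemma prox : is_proximity T o n c c' (b - a + 1).
Proof.
set p0 := o a :: route a (b - a).
have [hr hrs] : walk T (o a) (route a (b - a)) c' /\ size (route a (b - a)) = (2 * (b - a)).+1.
  by apply: route_ok => //; li.
have hw0 : walk T c p0 c'.
  by move: hr => /andP[h1 h2]; rewrite /walk /= adjC hac h1 h2.
have hs0 : size p0 = (2 * (b - a)).+2 by rewrite /= hrs.
have ex : exists N, [exists t : N.-tuple V, walk T c t c'].
  by exists (size p0); apply/existsP; exists (in_tuple p0).
case: (ex_minnP ex) => N /existsP [t ht] hmin.
have short : forall q, walk T c q c' -> N <= size q.
  by move=> q hq; apply: hmin; apply/existsP; exists (in_tuple q).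
split.
  exists (val t); split => // q hq; rewrite size_tuple; exact: short.
move=> p [hw hsh].
have hp : p != [::] by case: p hw {hsh} => // /andP[_ /= /eqP e]; by move: hcc; rewrite e eqxx.
have hle : size p <= size p0 by apply: hsh.
have up := upper hc' (leqnn _) hw hc hp.
case: (ltnP a b) => hab'.
  have [n1 n2] := hlt hab'.
  have hs1 : forall i, 1 <= i <= n -> adj T (o i) c' -> b <= i.
    move=> i hi ai; case: (leqP b i) => // hib.
    case: (eqVneq i b.-1) => [ei|nei].
      by move: n2; rewrite -ei ai.
    have hib2 : i + 2 <= b.
      have : i < b.-1 by rewrite ltn_neqAle nei /=; li.
      li.
    have hbb : 1 <= b <= n by apply/andP; li.
    by exfalso; apply: (sep tl hi hbb hib2 ai hbc).
  have hlow : forall i, 1 <= i <= n -> adj T (o i) c -> i <= a.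
    move=> i hi ai; case: (leqP i a) => // hai.
    case: (eqVneq i a.+1) => [ei|nei].
      by move: n1; rewrite -ei ai.
    have hai2 : a + 2 <= i.
      have : a.+1 < i by rewrite ltn_neqAle eq_sym nei /=; li.
      li.
    have haa : 1 <= a <= n by apply/andP; li.
    by exfalso; apply: (sep tl haa hi hai2 hac ai).
  have lo := lower hc' hs1 (leqnn _) hw hc hlow hcc.
  move: up lo; rewrite hs0 in hle; li.
rewrite hs0 in hle; move: up; li.
Qed.

Lemma main_sec :
  [/\ is_proximity T o n c c' (b - a + 1),
      (forall m, a <= m < b -> beta m \in nbr (chain T o beta a (m - a)) (o m)),
      c' \in nbr (chain T o beta a (b - a)) (o b) &
      adj (meas_x (chain T o beta a (b - a)) (o b) c') c c'].
Proof.
have hb : b - a <= b - a by [].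
have eb : a + (b - a) = b by li.
have hc'N : c' \in nbr (chain T o beta a (b - a)) (o b).
  case: (inv_chain hb) => _ _ _ _ HB2.
  have H2 : forall i, a <= i < a + (b - a) -> ~~ adj T (o i) c'.
    move=> i /andP[i1 i2]; apply/negP => ai.
    have hi : 1 <= i <= n by apply/andP; li.
    have hbb : 1 <= b <= n by apply/andP; li.
    case: (eqVneq i b.-1) => [ei|nei].
      have hab' : a < b by li.
      by case: (hlt hab') => _; rewrite -ei ai.
    have hib2 : i + 2 <= b.
      have : i < b.-1 by rewrite ltn_neqAle nei /=; li.
      li.
    by apply: (sep tl hi hbb hib2 ai hbc).
  rewrite in_nbr client_chain //=; have := HB2 c' hc' H2; rewrite eb => ->; exact: hbc.
split => //.
- exact: prox.
- move=> m /andP[m1 m2].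
  have hk : m - a <= b - a by li.
  have em : a + (m - a) = m by li.
  have /andP[h1 h2] : adj T (o m) (beta m) && adj T (o m.+1) (beta m) by apply: hbeta; apply/andP.
  have hm : 1 <= m <= n by apply/andP; li.
  have btc : beta m \in cl by apply: (adj_oc tl hm h1).
  case: (inv_chain hk) => _ _ _ _ HB2.
  have H2 : forall i, a <= i < a + (m - a) -> ~~ adj T (o i) (beta m).
    move=> i /andP[i1 i2]; apply/negP => ai.
    have hi : 1 <= i <= n by apply/andP; li.
    have hm1 : 1 <= m.+1 <= n by apply/andP; li.
    have hi2 : i + 2 <= m.+1 by li.
    by apply: (sep tl hi hm1 hi2 ai h2).
  rewrite in_nbr client_chain //=; have := HB2 _ btc H2; rewrite em => ->; exact: h1.
- case: (inv_chain hb) => _ _ _ HB1 _.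
  have hbb : 1 <= b <= n by apply/andP; li.
  rewrite meas_adj_fin //.
  + by rewrite eb in HB1.
  + by rewrite -{1}eb orch_chain.
  + by rewrite cl_neq.
  + exact: client_chain.
Qed.

End C.

Theorem lemma5 (V : finType) (T : graph V) (n kc kb : nat) (o : nat -> V)
    (a b : nat) (c c' : V) (beta : nat -> V) :
  tree_like T n kc kb o ->
  1 <= a -> a <= b -> b <= n ->
  c \in clients T o n -> c' \in clients T o n -> c != c' ->
  c \in nbr T (o a) -> c' \in nbr T (o b) ->
  (a < b -> c \notin nbr T (o a.+1) /\ c' \notin nbr T (o b.-1)) ->
  (forall m, a <= m < b -> beta m \in nbr T (o m) :&: nbr T (o m.+1)) ->
  [/\ is_proximity T o n c c' (b - a + 1),
      (forall m, a <= m < b -> beta m \in nbr (chain T o beta a (m - a)) (o m)),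
      c' \in nbr (chain T o beta a (b - a)) (o b) &
      adj (meas_x (chain T o beta a (b - a)) (o b) c') c c'].
Proof.
move=> tl ha hab hbn hc hc' hcc hca hcb hlt hbeta.
have hac : adj T (o a) c by move: hca; rewrite in_nbr => /andP[].
have hbc : adj T (o b) c' by move: hcb; rewrite in_nbr => /andP[].
have hlt' : a < b -> ~~ adj T (o a.+1) c /\ ~~ adj T (o b.-1) c'.
  by move=> h; case: (hlt h); rewrite !in_nbr (client_gv hc) (client_gv hc').
have hbeta' : forall m, a <= m < b -> adj T (o m) (beta m) && adj T (o m.+1) (beta m).
  by move=> m hm; move: (hbeta m hm); rewrite in_setI !in_nbr => /andP[/andP[_ ->] /andP[_ ->]].
exact: (main_sec tl ha hab hbn hc hc' hcc hac hbc hlt' hbeta').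
Qed.
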